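(* There is a positive existential formula $CO(x)$ in the language $\{0,1,+,\mid,R,T\}$ such that for every prime $p$ and every $n\in\mathbb{Z}$, $\mathfrak{D}_p\models CO(n)$ if and only if $p\nmid n$. That is, the collection of sets $CO_p=\{n\in\mathbb{Z}: p\nmid n\}$ is uniformly positive existentially definable in $\mathcal{D}=\{\mathfrak{D}_p: p \text{ prime}\}$.
   Context: For a prime $p$, $x\mid_p y$ means $y=\pm xp^s$ for some $s\in\mathbb{Z}$. $\mathfrak{D}_p=(\mathbb{Z};0,1,+,\mid,\mid_p,\mathbb{Z}\smallsetminus\{-1,0,1\})$, where $\mid$ is ordinary divisibility, $R$ is interpreted as $\mid_p$, and the unary predicate $T$ as the set $\mathbb{Z}\smallsetminus\{-1,0,1\}$. *)

(* Defs.v *)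
From HB Require Import structures.
From mathcomp Require Import all_boot all_order all_algebra.
Set Implicit Arguments. Unset Strict Implicit. Unset Printing Implicit Defensive.
Import Order.TTheory GRing.Theory Num.Theory.
Local Open Scope ring_scope.

(* Terms of the language {0,1,+,|,R,T}; variables are de Bruijn indices. *)
Inductive term : Type :=
  | tVar : nat -> term
  | tZero : term
  | tOne : term
  | tAdd : term -> term -> term.

Inductive pe_formula : Type :=
  | fEq  : term -> term -> pe_formula
  | fDiv : term -> term -> pe_formula
  | fR   : term -> term -> pe_formula
  | fT   : term -> pe_formula
  | fAnd : pe_formula -> pe_formula -> pe_formula
  | fOr  : pe_formula -> pe_formula -> pe_formula
  | fEx  : pe_formula -> pe_formula.

Definition divp (p : nat) (x y : int) : Prop :=
  exists s : int,
    (y%:~R : rat) = x%:~R * (p%:~R) ^ s \/ (y%:~R : rat) = - (x%:~R * (p%:~R) ^ s).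

Definition Tpred (x : int) : Prop := x != -1 /\ x != 0 /\ x != 1.

Fixpoint eval_term (e : nat -> int) (t : term) : int :=
  match t with
  | tVar i => e i
  | tZero => 0
  | tOne => 1
  | tAdd a b => eval_term e a + eval_term e b
  end.

Definition scons (z : int) (e : nat -> int) : nat -> int :=
  fun i => match i with O => z | S j => e j end.

Fixpoint sat (p : nat) (e : nat -> int) (f : pe_formula) : Prop :=
  match f with
  | fEq a b => eval_term e a = eval_term e b
  | fDiv a b => (eval_term e a %| eval_term e b)%Z
  | fR a b => divp p (eval_term e a) (eval_term e b)
  | fT a => Tpred (eval_term e a)
  | fAnd g h => sat p e g /\ sat p e h
  | fOr g h => sat p e g \/ sat p e h
  | fEx g => exists z : int, sat p (scons z e) g
  end.

(* Main.v *)
Require Import Defs.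
From mathcomp Require Import all_boot all_order all_algebra.
From mathcomp Require Import all_fingroup all_solvable zify.
Import Order.TTheory GRing.Theory Num.Theory.
Local Open Scope ring_scope.

Lemma pow_int_cases (p : nat) (w : int) (s : int) : prime p ->
  (w%:~R : rat) = (p%:~R) ^ s -> w = 1 \/ (p%:Z %| w)%Z.
Proof.
move=> pp.
have p0 : (p%:~R : rat) != 0 by rewrite intr_eq0 eqz_nat -lt0n prime_gt0.
case: s => k.
- rewrite -exprnP => H.
  have -> : w = (p%:Z) ^+ k by apply: (@intr_inj rat); rewrite H rmorphXn.
  case: k {H} => [|k]; first by left.
  by right; rewrite exprS dvdz_mulr.
- rewrite NegzE -exprnN => H.
  exfalso.
  have H3 : w * p%:Z ^+ k.+1 = 1.
    by apply: (@intr_inj rat); rewrite rmorphM rmorphXn /= H mulVf ?expf_neq0 // rmorph1.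
  have : (p%:Z %| w * p%:Z ^+ k.+1)%Z by rewrite exprS mulrCA dvdz_mulr.
  by rewrite H3 dvdzE /= dvdn1 => /eqP ep; rewrite ep in pp.
Qed.

Lemma not_dvd1 (p : nat) : prime p -> ~ (p%:Z %| 1)%Z.
Proof. by move=> pp; rewrite dvdz1 /= => /eqP ep; rewrite ep in pp. Qed.

Theorem lemma4p10 :
  exists CO : pe_formula,
    forall (p : nat), prime p ->
    forall (e : nat -> int),
      sat p e CO <-> ~ (p%:Z %| e 0%N)%Z.
Proof.
exists (fEx (fEx (fAnd (fR tOne (tVar 1)) (fAnd (fT (tVar 1))
  (fAnd (fEq (tAdd (tVar 0) tOne) (tVar 1)) (fDiv (tVar 2) (tVar 0))))))).
move=> p pp e; rewrite /=; split.
- move=> [y [z [[s Hs] [[Ty1 [Ty0 Ty2]] [Hzy Hxz]]]]] Hpx.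
  have Hpz : (p%:Z %| z)%Z := dvdz_trans Hpx Hxz.
  have Hpy : (p%:Z %| y)%Z.
    move: Hs; rewrite /= mul1r => -[H|H].
    + case: (pow_int_cases _ _ _ pp H) => [Hy|//]; by rewrite Hy eqxx in Ty2.
    + have H' : ((- y)%:~R : rat) = (p%:~R) ^ s by rewrite mulrNz H opprK.
      case: (pow_int_cases _ _ _ pp H') => [Hy|Hd].
      * by move: Ty1; rewrite -[y]opprK Hy eqxx.
      * by rewrite -[y]opprK rpredN.
  have H1 : y - z = 1 by rewrite -Hzy addrC addKr.
  have := rpredB Hpy Hpz; rewrite H1.
  exact: not_dvd1 _ pp.
- move=> Hn.
  set x := e 0%N in Hn *.
  set m := `|x|%N.
  have Hpm : ~~ (p %| m)%N by apply/negP => H; apply: Hn; rewrite dvdzE.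
  have m0 : (0 < m)%N.
    by rewrite lt0n; apply/negP => /eqP H; move: Hpm; rewrite H dvdn0.
  have cop : coprime p m by rewrite prime_coprime.
  set t := totient m.
  have t0 : (0 < t)%N by rewrite totient_gt0.
  have E := Euler_exp_totient cop.
  have p2 : (1 < p)%N by apply: prime_gt1.
  have n2 : (1 < p ^ t)%N.
    by apply: (leq_trans p2); rewrite -{1}(expn1 p) leq_pexp2l // ltnW.
  have Hd : (m %| p ^ t - 1)%N.
    by rewrite -eqn_mod_dvd ?(ltnW n2) // E.
  exists (Posz (p ^ t)); exists (Posz (p ^ t - 1)).
  split; last split; last split.
  + exists (Posz t); left; rewrite mul1r -exprnP.
    by rewrite -!pmulrn natrX.
  + rewrite /Tpred /=; lia.
  + rewrite /=; lia.
  + by rewrite /= dvdzE.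
Qed.
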